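(* Consider the discrete first-price auction in the model without ties, with values drawn i.i.d. from a distribution with full support on $X$. Let $\beta$ be a symmetric equilibrium (SE) bidding function, let $v\in X$ with $v+1\in X$, and let $b=\beta(v)$. Then $\beta(v+1)\le b+1$.
   Context: Model. There are $n\ge 2$ risk-neutral bidders competing for one indivisible object. Normalise the grid so that values and bids lie in $X=\{0,1,2,\dots,x\}$ for some $x\in\mathbb N$. Each bidder $i$ privately learns a value $v_i\in X$; values are drawn independently from a common distribution in which every element of $X$ has strictly positive probability. Each bidder submits a bid $b_i\in X$. A (pure) strategy is a bidding function $\beta:X\to X$. In the model without ties, bidder $i$ wins iff $b_i>b_j$ for all $j\neq i$ (if the highest bid is tied, nobody wins). In the first-price auction, a bidder with value $v_i$ bidding $b_i$ gets expected payoff $(v_i-b_i)\Pr(i\text{ wins})$. An equilibrium is a profile of bidding functions such that each bidder's bidding function maximises their expected payoff given the others' bidding functions (a pure-strategy Bayes–Nash equilibrium) and such that no bidder uses a weakly dominated bidding function (a bidding function is weakly dominated if some other bidding function yields at least as high expected payoff against every profile of opponents' bidding functions, and strictly higher against some). A symmetric equilibrium (SE) is an equilibrium in which all bidders use the same bidding function $\beta$. *)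

(* Defs.v *)
From mathcomp Require Import all_boot all_order all_algebra.
Set Implicit Arguments. Unset Strict Implicit. Unset Printing Implicit Defensive.
Import Order.TTheory GRing.Theory Num.Theory.
Local Open Scope ring_scope.

(* The grid X = {0,...,x} is 'I_(x.+1). *)
Definition bidfun (x : nat) := 'I_(x.+1) -> 'I_(x.+1).

Definition profile (n x : nat) := 'I_n -> bidfun x.

Definition upd (n x : nat) (B : profile n x) (i : 'I_n) (b : bidfun x)
  : profile n x := fun j => if j == i then b else B j.

Definition prob_below (R : realFieldType) (x : nat) (p : 'I_(x.+1) -> R)
  (bj : bidfun x) (c : 'I_(x.+1)) : R :=
  \sum_(w : 'I_(x.+1) | (bj w < c)%N) p w.

(* Probability that bidder i, bidding c, wins (strictly highest bid; values
   are independent, so this is the product over opponents). *)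
Definition win_prob (R : realFieldType) (n x : nat) (p : 'I_(x.+1) -> R)
  (B : profile n x) (i : 'I_n) (c : 'I_(x.+1)) : R :=
  \prod_(j < n | j != i) prob_below p (B j) c.

Definition payoff (R : realFieldType) (n x : nat) (p : 'I_(x.+1) -> R)
  (B : profile n x) (i : 'I_n) : R :=
  \sum_(v : 'I_(x.+1))
     p v * (((v : nat)%:R - (B i v : nat)%:R) * win_prob p B i (B i v)).

Definition weakly_dominated (R : realFieldType) (n x : nat)
  (p : 'I_(x.+1) -> R) (i : 'I_n) (b : bidfun x) : Prop :=
  exists b' : bidfun x,
    (forall B : profile n x, payoff p (upd B i b) i <= payoff p (upd B i b') i)
    /\ (exists B : profile n x, payoff p (upd B i b) i < payoff p (upd B i b') i).

Definition equilibrium (R : realFieldType) (n x : nat) (p : 'I_(x.+1) -> R)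
  (B : profile n x) : Prop :=
  (forall (i : 'I_n) (b' : bidfun x), payoff p (upd B i b') i <= payoff p B i)
  /\ (forall i : 'I_n, ~ weakly_dominated p i (B i)).

Definition symmetric_equilibrium (R : realFieldType) (n x : nat)
  (p : 'I_(x.+1) -> R) (beta : bidfun x) : Prop :=
  equilibrium p (fun _ : 'I_n => beta).

(* Main.v *)
Require Import Defs.
From mathcomp Require Import all_boot all_order all_algebra.
From mathcomp Require Import lra.
Import Order.TTheory GRing.Theory Num.Theory.
Local Open Scope ring_scope.

Theorem lemma4 (R : realFieldType) (n x : nat) (p : 'I_(x.+1) -> R)
  (beta : 'I_(x.+1) -> 'I_(x.+1)) :
  (2 <= n)%N ->
  (forall v, 0 < p v) -> \sum_(v : 'I_(x.+1)) p v = 1 ->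
  symmetric_equilibrium n p beta ->
  forall v v1 : 'I_(x.+1), (v1 : nat) = (v : nat).+1 ->
    (beta v1 <= (beta v).+1)%N.
Proof.
move=> n2 ppos _ [Hbr _] v v1 ev1.
have n0 : (0 < n)%N by apply: leq_trans n2.
pose i : 'I_n := Ordinal n0.
pose W c := \prod_(j < n | j != i) prob_below p beta c.
have Wwin : forall b' c, win_prob p (upd (fun _ => beta) i b') i c = W c.
  by move=> b' c; apply: eq_bigr => j /negbTE hj; rewrite /upd hj.
have Wwin0 : forall c, win_prob p (fun _ => beta) i c = W c by [].
have opt : forall w c : 'I_(x.+1),
    ((w:nat)%:R - (c:nat)%:R) * W c <= ((w:nat)%:R - (beta w : nat)%:R) * W (beta w).
  move=> w c; pose b' := fun u => if u == w then c else beta u.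
  have := Hbr i b'; rewrite /payoff.
  rewrite (bigD1 w) //= [X in _ <= X](bigD1 w) //=.
  have eu : upd (fun=> beta) i b' i = b' by rewrite /upd eqxx.
  rewrite !Wwin Wwin0 eu {1}/b' eqxx.
  rewrite (eq_bigr (fun u => p u * (((u:nat)%:R - (beta u : nat)%:R) * W (beta u)))); last first.
    by move=> u /negbTE hu; rewrite /b' hu Wwin.
  rewrite /b' eqxx lerD2r => h; move: h; rewrite ler_pM2l //.
have pb0 : forall bj c, 0 <= prob_below p bj c.
  by move=> bj c; apply: sumr_ge0 => u _; apply: ltW.
have pbpos : forall (c : 'I_(x.+1)) w, (beta w < c)%N -> 0 < prob_below p beta c.
  move=> c w hw; rewrite /prob_below (bigD1 w) //=.
  by apply: ltr_pwDl => //; apply: sumr_ge0 => u _; apply: ltW.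
have Wpos : forall (c : 'I_(x.+1)) w, (beta w < c)%N -> 0 < W c.
  by move=> c w hw; apply: prodr_gt0 => j _; apply: pbpos hw.
have Wmono : forall c c' : 'I_(x.+1), (c <= c')%N -> W c <= W c'.
  move=> c c' hc; apply: ler_prod => j _; rewrite pb0 /=.
  rewrite /prob_below [X in _ <= X]big_mkcond [X in X <= _]big_mkcond /=.
  apply: ler_sum => u _; case: ifP => h1; first by rewrite (leq_trans h1 hc).
  by case: ifP => _ //; apply: ltW.
have mono : forall w w' : 'I_(x.+1), (w <= w')%N -> (beta w <= beta w')%N.
  move=> w w' hw; rewrite leqNgt; apply/negP => hlt.
  have Y0 := Wpos _ _ hlt.
  have XY := Wmono _ _ (ltnW hlt).
  have H1 := opt w (beta w'); have H2 := opt w' (beta w).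
  move: hw; rewrite leq_eqVlt => /orP [/eqP/val_inj ew|hw].
    by subst w'; rewrite ltnn in hlt.
  have hw' : ((w:nat)%:R + 1 <= (w':nat)%:R :> R) by rewrite natr1 ler_nat.
  have hd : ((beta w':nat)%:R + 1 <= (beta w:nat)%:R :> R) by rewrite natr1 ler_nat.
  set X := W (beta w') in XY H1 H2; set Y := W (beta w) in Y0 XY H1 H2.
  have e : Y <= X by nra.
  have eXY : X = Y by apply/eqP; rewrite eq_le XY e.
  rewrite eXY in H1; move: H1 hd Y0; clear.
  move: Y ((beta w)%:R) ((beta w')%:R) ((w:nat)%:R) => Y a b c H1 hd Y0; nra.
rewrite leqNgt; apply/negP => hc.
have hb1 : ((beta v).+1 < x.+1)%N by apply: leq_ltn_trans (ltnW hc) (ltn_ord _).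
pose b1 : 'I_(x.+1) := Ordinal hb1.
have eW : W b1 = W (beta v1).
  apply: eq_bigr => j _; apply: eq_bigl => u /=.
  case: (leqP (u:nat) v) => hu.
    have := mono _ _ hu; move=> h; rewrite ltnS h.
    by apply/esym; apply: (leq_ltn_trans h); apply: ltnW.
  have hu' : (v1 <= u)%N by rewrite ev1.
  have := mono _ _ hu' => h; rewrite ltnS.
  apply/idP/idP => h2; exfalso.
    by have := leq_trans h h2; rewrite leqNgt (ltn_trans (ltnSn _) hc).
  by move: (leq_trans h2 h); rewrite ltnn.
have Y0 : 0 < W b1 by apply: (Wpos _ v); rewrite /= ltnSn.
have H := opt v1 b1.
rewrite eW in H Y0.
have ev : ((v1:nat)%:R = (v:nat)%:R + 1 :> R) by rewrite ev1 natr1.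
have eb : ((b1:nat)%:R = (beta v:nat)%:R + 1 :> R) by rewrite /= natr1.
have hcR : ((beta v:nat)%:R + 2 <= (beta v1:nat)%:R :> R).
  by rewrite -[2]/(2%:R) -natrD ler_nat addn2.
rewrite ev eb in H; move: H hcR Y0; clear.
move: (W (beta v1)) ((beta v)%:R) ((beta v1)%:R) ((v:nat)%:R) => Y a b c H hd Y0; nra.
Qed.
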